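(* Let $d\ge1$, $p>1$, $s\in(0,1)$, and $\alpha_1,\alpha_2\in\mathbb{R}$ with $\alpha=\alpha_1+\alpha_2$, $\alpha_1p,\alpha_2p\in(-d,sp)$, $0\le\alpha p<sp$ and $sp-\alpha p<d$. Let $p<q<\frac{p(d-s+\alpha)}{d-sp+\alpha p}$, set $r=p\frac{q-1}{p-1}$ and \[ a=\frac{d(q-p)}{(q-1)\big(dp-(d-sp+\alpha p)q\big)}, \] where $\delta_\alpha:=dp-(d-sp+\alpha p)q>0$. Let $\mathcal{C}_\alpha>0$ be the weighted fractional Sobolev constant described in the context. Then for all $u\in\mathcal{D}^{p,q}_{s,\alpha}$, \[ \|u\|_{L^r(\mathbb{R}^d)}\le\mathcal{C}_\alpha^{a/p}\,[u]_{W^{s,p,\alpha}(\mathbb{R}^d)}^a\,\|u\|_{L^q(\mathbb{R}^d)}^{1-a}. \]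
   Context: The weighted Gagliardo seminorm is $[u]_{W^{s,p,\alpha}(\mathbb{R}^d)}^p=\int_{\mathbb{R}^d}\int_{\mathbb{R}^d}\frac{|u(x)-u(y)|^p}{|x-y|^{d+sp}}|x|^{\alpha_1p}|y|^{\alpha_2p}dx\,dy$; $W^{s,p,\alpha}(\mathbb{R}^d)$ is the closure of $C^1_c(\mathbb{R}^d)$ with respect to the norm $(\|u\|_{L^p(\mathbb{R}^d)}^p+[u]_{W^{s,p,\alpha}(\mathbb{R}^d)}^p)^{1/p}$; and $\mathcal{D}^{p,q}_{s,\alpha}=(W^{s,p,\alpha}(\mathbb{R}^d)\cap L^q(\mathbb{R}^d))\setminus\{0\}$. $\mathcal{C}_\alpha=\mathcal{C}_\alpha(d,p,s,\alpha_1,\alpha_2)>0$ is a constant such that, with $p^*_{s,\alpha}=\frac{dp}{d-sp+\alpha p}$, the weighted fractional Sobolev inequality $\|u\|_{L^{p^*_{s,\alpha}}(\mathbb{R}^d)}\le\mathcal{C}_\alpha^{1/p}[u]_{W^{s,p,\alpha}(\mathbb{R}^d)}$ holds for all $u\in W^{s,p,\alpha}(\mathbb{R}^d)$ (such a constant exists under the stated hypotheses by a fractional Caffarelli–Kohn–Nirenberg inequality of Nguyen and Squassina). *)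

(* Defs.v *)
(* R^d is modelled as 'rV[R]_d. *)
From HB Require Import structures.
From mathcomp Require Import all_boot all_order all_algebra.
From mathcomp Require Import all_classical all_reals all_analysis.
Set Implicit Arguments. Unset Strict Implicit. Unset Printing Implicit Defensive.
Import Order.TTheory GRing.Theory Num.Theory.
Import numFieldNormedType.Exports.
Local Open Scope classical_set_scope.
Local Open Scope ring_scope.

Section WeightedFractional.
Context {R : realType}.

Definition enorm (d : nat) (x : 'rV[R]_d) : R := Num.sqrt (\sum_(i < d) x ord0 i ^+ 2).

Definition row_of_tuple (d : nat) (t : d.-tuple R) : 'rV[R]_d := \row_(i < d) tnth t i.

(* Lebesgue measurability on R^d (Borel, product sigma-algebra on d.-tuple R) *)
Definition meas_Rd (d : nat) (u : 'rV[R]_d -> R) : Prop :=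
  measurable_fun setT (u \o @row_of_tuple d).

Fixpoint iint (n : nat) : (n.-tuple R -> \bar R) -> \bar R :=
  match n return (n.-tuple R -> \bar R) -> \bar R with
  | 0 => fun f => f [tuple]
  | n'.+1 => fun f =>
      (\int[@lebesgue_measure R]_(x in setT) iint (fun t => f (cons_tuple x t)))%E
  end.

(* integral over R^d of a nonnegative function; by Tonelli it coincides with
   the Lebesgue integral for (nonnegative) measurable integrands *)
Definition intRd (d : nat) (f : 'rV[R]_d -> \bar R) : \bar R :=
  iint (f \o @row_of_tuple d).

Definition Lpnorm (d : nat) (p : R) (u : 'rV[R]_d -> R) : \bar R :=
  poweR (intRd (fun x => (`|u x| `^ p)%:E)) p^-1.

Definition gagliardo_p (d : nat) (s p a1 a2 : R) (u : 'rV[R]_d -> R) : \bar R :=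
  intRd (fun x => intRd (fun y =>
    ((`|u x - u y| `^ p / enorm (x - y) `^ (d%:R + s * p))
      * enorm x `^ (a1 * p) * enorm y `^ (a2 * p))%:E)).

Definition gagliardo (d : nat) (s p a1 a2 : R) (u : 'rV[R]_d -> R) : \bar R :=
  poweR (gagliardo_p s p a1 a2 u) p^-1.

Definition C1c (d : nat) (f : 'rV[R]_d -> R) : Prop :=
  continuous f /\
  (forall (i : 'I_d) (x : 'rV[R]_d), derivable f x (delta_mx ord0 i)) /\
  (forall i : 'I_d, continuous (fun x => 'D_(delta_mx ord0 i) f x)) /\
  compact (closure [set x | f x != 0]).

Definition Wnorm_p (d : nat) (s p a1 a2 : R) (u : 'rV[R]_d -> R) : \bar R :=
  (intRd (fun x => (`|u x| `^ p)%:E) + gagliardo_p s p a1 a2 u)%E.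

(* W^{s,p,alpha}(R^d): closure of C^1_c w.r.t. the norm above *)
Definition inW (d : nat) (s p a1 a2 : R) (u : 'rV[R]_d -> R) : Prop :=
  meas_Rd u /\
  exists phi : nat -> 'rV[R]_d -> R,
    (forall n, C1c (phi n)) /\
    ((fun n => Wnorm_p s p a1 a2 (u \- phi n)) @ \oo --> 0%E).

Definition inLq (d : nat) (q : R) (u : 'rV[R]_d -> R) : Prop :=
  meas_Rd u /\ (intRd (fun x => (`|u x| `^ q)%:E) < +oo)%E.

End WeightedFractional.

(* Main.v *)
Require Import Defs.
From HB Require Import structures.
From mathcomp Require Import all_boot all_order all_algebra.
From mathcomp Require Import all_classical all_reals all_analysis.
From mathcomp Require Import measurable_realfun.
From mathcomp Require Import ring lra.
Import Order.TTheory GRing.Theory Num.Theory.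
Local Open Scope ring_scope.

Section Real.
Context {R : realType}.
Implicit Types (f c P a x y : R).
Lemma powR_divK (f c P : R) : (0 <= f)%R -> (0 < c)%R -> (0 < P)%R ->
  ((f / c) `^ P = f `^ P / c `^ P)%R.
Proof.
move=> f0 c0 P0.
rewrite powRM ?invr_ge0 ?(ltW c0) //.
by rewrite -powR_inv1 ?(ltW c0) // powRAC powR_inv1 // powR_ge0.
Qed.

Lemma powR_invK (a P : R) : (0 <= a)%R -> (0 < P)%R -> ((a `^ P^-1) `^ P = a)%R.
Proof.
by move=> a0 P0; rewrite -powRrM mulVf ?gt_eqF // powRr1.
Qed.

Lemma young_scaled (x y cA cB a b P Q : R) : (0 <= x)%R -> (0 <= y)%R ->
  (0 < a)%R -> (0 < b)%R -> (0 < P)%R -> (0 < Q)%R -> (P^-1 + Q^-1 = 1)%R ->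
  cA = (a `^ P^-1)%R -> cB = (b `^ Q^-1)%R ->
  (x * y <= cA * cB / (a * P) * x `^ P + cA * cB / (b * Q) * y `^ Q)%R.
Proof.
move=> x0 y0 a0 b0 P0 Q0 PQ hA hB.
have cA0 : (0 < cA)%R by rewrite hA powR_gt0.
have cB0 : (0 < cB)%R by rewrite hB powR_gt0.
have := @conjugate_powR R (x / cA) (y / cB) P Q.
rewrite !divr_ge0 ?(ltW cA0) ?(ltW cB0) // => /(_ isT isT P0 Q0 PQ).
rewrite !powR_divK // hA hB !powR_invK ?(ltW a0) ?(ltW b0) // -hA -hB => H.
have cAB : (0 < cA * cB)%R by rewrite mulr_gt0.
rewrite -(ler_pM2l cAB) in H.
apply: le_trans (le_trans _ H) _.
  rewrite le_eqVlt; apply/orP; left; apply/eqP.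
  by field; rewrite ?gt_eqF.
rewrite le_eqVlt; apply/orP; left; apply/eqP.
by field; rewrite ?gt_eqF.
Qed.

End Real.

Section Iint.
Context {R : realType}.
Local Open Scope ereal_scope.

Lemma iint_ge0 n (F : n.-tuple R -> \bar R) : (forall t, 0 <= F t) -> 0 <= iint F.
Proof.
elim: n F => [|n IH] F F0 /=; first exact: F0.
apply: integral_ge0 => x _; apply: IH => t; exact: F0.
Qed.

Lemma iint_meas n dX (X : measurableType dX) (G : X * n.-tuple R -> \bar R) :
  measurable_fun setT G -> (forall z, 0 <= G z) ->
  measurable_fun setT (fun x => iint (fun t => G (x, t))).
Proof.
elim: n dX X G => [|n IH] dX X G mG G0 /=.
  apply: (measurableT_comp mG); exact: measurable_fun_pair.
pose H := fun z : X * R => iint (fun t => G (z.1, cons_tuple z.2 t)).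
have mH : measurable_fun setT H.
  apply: (IH _ (X * R)%type (fun z : (X * R) * n.-tuple R => G (z.1.1, cons_tuple z.1.2 z.2))) => //.
  apply: (measurableT_comp mG); apply: measurable_fun_pair => /=.
    exact: (measurableT_comp measurable_fst measurable_fst).
  apply: (@measurable_cons _ _ _ _ (fun z : (X * R) * n.-tuple R => z.1.2) n snd).
    exact: (measurableT_comp measurable_snd measurable_fst).
  exact: measurable_snd.
have H0 : forall z, 0 <= H z by move=> z; apply: iint_ge0.
exact: (measurable_fun_fubini_tonelli_F (m2 := lebesgue_measure) H mH H0).
Qed.


Lemma iint_meas1 n (F : n.+1.-tuple R -> \bar R) :
  measurable_fun setT F -> (forall t, 0 <= F t) ->
  measurable_fun setT (fun x => iint (fun t => F (cons_tuple x t))).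
Proof.
move=> mF F0.
apply: (@iint_meas n _ R (fun z : R * n.-tuple R => F (cons_tuple z.1 z.2))) => //.
apply: (measurableT_comp mF).
exact: (@measurable_cons _ _ _ _ fst n snd).
Qed.

Lemma meas_sec n (F : n.+1.-tuple R -> \bar R) x :
  measurable_fun setT F -> measurable_fun setT (fun t => F (cons_tuple x t)).
Proof.
move=> mF; apply: (measurableT_comp mF).
exact: (@measurable_cons _ _ _ _ (fun _ => x) n id).
Qed.

Lemma iint_le n (F G : n.-tuple R -> \bar R) :
  measurable_fun setT F -> measurable_fun setT G ->
  (forall t, 0 <= F t) -> (forall t, F t <= G t) -> iint F <= iint G.
Proof.
elim: n F G => [|n IH] F G mF mG F0 FG /=; first exact: FG.
apply: ge0_le_integral => //.
- by move=> x _; apply: iint_ge0 => t.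
- exact: iint_meas1.
- apply: iint_meas1 => // t; exact: le_trans (F0 t) (FG t).
- by move=> x _; apply: IH => //; apply: meas_sec.
Qed.

Lemma iint_add n (F G : n.-tuple R -> \bar R) :
  measurable_fun setT F -> measurable_fun setT G ->
  (forall t, 0 <= F t) -> (forall t, 0 <= G t) ->
  iint (fun t => F t + G t) = iint F + iint G.
Proof.
elim: n F G => [|n IH] F G mF mG F0 G0 //=.
transitivity (\int[lebesgue_measure]_(x in setT) (iint (fun t => F (cons_tuple x t)) +
                               iint (fun t => G (cons_tuple x t)))).
  by apply: eq_integral => x _; apply: IH => //; apply: meas_sec.
apply: ge0_integralD => //.
- by move=> x _; apply: iint_ge0.
- exact: iint_meas1.
- by move=> x _; apply: iint_ge0.
- exact: iint_meas1.
Qed.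

Lemma iint_scale n (F : n.-tuple R -> \bar R) (k : R) :
  measurable_fun setT F -> (forall t, 0 <= F t) -> (0 <= k)%R ->
  iint (fun t => k%:E * F t) = k%:E * iint F.
Proof.
elim: n F => [|n IH] F mF F0 k0 //=.
transitivity (\int[lebesgue_measure]_(x in setT) (k%:E * iint (fun t => F (cons_tuple x t)))).
  by apply: eq_integral => x _; apply: IH => //; apply: meas_sec.
apply: ge0_integralZl_EFin => //.
- by move=> x _; apply: iint_ge0.
- exact: iint_meas1.
Qed.

Lemma iint_zero n (H K : n.-tuple R -> \bar R) :
  measurable_fun setT H -> measurable_fun setT K ->
  (forall t, 0 <= H t) -> (forall t, 0 <= K t) ->
  (forall t, H t = 0 -> K t = 0) -> iint H = 0 -> iint K = 0.
Proof.
elim: n H K => [|n IH] H K mH mK H0 K0 HK /=; first exact: HK.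
set h := fun x => iint (fun t => H (cons_tuple x t)).
set k := fun x => iint (fun t => K (cons_tuple x t)).
have mh : measurable_fun setT h by exact: iint_meas1.
have mk : measurable_fun setT k by exact: iint_meas1.
have h0 x : 0 <= h x by apply: iint_ge0.
have k0 x : 0 <= k x by apply: iint_ge0.
move=> ih0.
have ih1 : \int[lebesgue_measure]_(x in setT) `|h x| = 0.
  by rewrite -ih0; apply: eq_integral => x _; rewrite gee0_abs.
have aeh := (ae_eq_integral_abs lebesgue_measure measurableT mh).1 ih1.
have aek : ae_eq lebesgue_measure setT k (cst 0).
  apply: filterS aeh => x hx Tx.
  apply: (IH (fun t => H (cons_tuple x t)) (fun t => K (cons_tuple x t))) => //.
  - exact: meas_sec.
  - exact: meas_sec.
  - by move=> t; apply: HK.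
  - exact: (hx Tx).
have := (ae_eq_integral_abs lebesgue_measure measurableT mk).2 aek.
move=> <-; apply: eq_integral => x _; rewrite gee0_abs //.
Qed.



Lemma mpow n (h : n.-tuple R -> R) (P : R) :
  measurable_fun setT h -> measurable_fun setT (fun t => h t `^ P)%R.
Proof. move=> mh; have := measurableT_comp ((@measurable_powR R P)) mh. exact. Qed.

Lemma iint_hoelder n (f g : n.-tuple R -> R) (P Q : R) :
  measurable_fun setT f -> measurable_fun setT g ->
  (forall t, 0 <= f t)%R -> (forall t, 0 <= g t)%R ->
  (0 < P)%R -> (0 < Q)%R -> (P^-1 + Q^-1 = 1)%R ->
  iint (fun t => (f t * g t)%:E) <=
    poweR (iint (fun t => (f t `^ P)%:E)) P^-1 *
    poweR (iint (fun t => (g t `^ Q)%:E)) Q^-1.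
Proof.
move=> mf mg f0 g0 P0 Q0 PQ.
have mfP : measurable_fun setT (fun t => (f t `^ P)%:E).
  by apply: measurableT_comp => //; apply: mpow.
have mgQ : measurable_fun setT (fun t => (g t `^ Q)%:E).
  by apply: measurableT_comp => //; apply: mpow.
have mfg : measurable_fun setT (fun t => (f t * g t)%:E).
  by apply: measurableT_comp => //; apply: measurable_funM.
set A := iint (fun t => (f t `^ P)%:E).
set B := iint (fun t => (g t `^ Q)%:E).
have A0 : 0 <= A by apply: iint_ge0 => t; rewrite lee_fin powR_ge0.
have B0 : 0 <= B by apply: iint_ge0 => t; rewrite lee_fin powR_ge0.
have RHS0 : 0 <= poweR A P^-1 * poweR B Q^-1 by rewrite mule_ge0 // poweR_ge0.
have [Aeq0|Aneq0] := eqVneq A 0.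
  rewrite (@iint_zero _ (fun t => (f t `^ P)%:E)) //.
  - by move=> t; rewrite lee_fin powR_ge0.
  - by move=> t; rewrite lee_fin mulr_ge0.
  - by move=> t [] /powR_eq0_eq0 ->; rewrite mul0r.
have [Beq0|Bneq0] := eqVneq B 0.
  rewrite (@iint_zero _ (fun t => (g t `^ Q)%:E)) //.
  - by move=> t; rewrite lee_fin powR_ge0.
  - by move=> t; rewrite lee_fin mulr_ge0.
  - by move=> t [] /powR_eq0_eq0 ->; rewrite mulr0.
have Apos : 0 < A by rewrite lt0e Aneq0 A0.
have Bpos : 0 < B by rewrite lt0e Bneq0 B0.
have [Ay|Ay] := eqVneq A +oo.
  rewrite Ay poweRyr ?invr_neq0 ?gt_eqF // gt0_mulye ?leey //.
  exact: poweR_gt0.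
have [By|By] := eqVneq B +oo.
  rewrite By poweRyr ?invr_neq0 ?gt_eqF // gt0_muley ?leey //.
  exact: poweR_gt0.
have Afin : A \is a fin_num by rewrite ge0_fin_numE // ltey.
have Bfin : B \is a fin_num by rewrite ge0_fin_numE // ltey.
set a := fine A; set b := fine B.
have a0 : (0 < a)%R by rewrite fine_gt0 // Apos ltey.
have b0 : (0 < b)%R by rewrite fine_gt0 // Bpos ltey.
have eA : A = a%:E by rewrite fineK.
have eB : B = b%:E by rewrite fineK.
set cA := (a `^ P^-1)%R; set cB := (b `^ Q^-1)%R.
apply: (@le_trans _ _ (iint (fun t => ((cA * cB / (a * P)) * f t `^ P)%:E +
                                      ((cA * cB / (b * Q)) * g t `^ Q)%:E))).
  apply: iint_le => //.
  - apply: emeasurable_funD.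
    + by apply: measurableT_comp => //; apply: measurable_funM => //; apply: mpow.
    + by apply: measurableT_comp => //; apply: measurable_funM => //; apply: mpow.
  - by move=> t; rewrite lee_fin mulr_ge0.
  - move=> t; rewrite -EFinD lee_fin; exact: young_scaled.
rewrite iint_add; first last.
- by move=> t; rewrite lee_fin mulr_ge0 ?powR_ge0 // divr_ge0 ?mulr_ge0 ?powR_ge0 // ltW.
- by move=> t; rewrite lee_fin mulr_ge0 ?powR_ge0 // divr_ge0 ?mulr_ge0 ?powR_ge0 // ltW.
- by apply: measurableT_comp => //; apply: measurable_funM => //; apply: mpow.
- by apply: measurableT_comp => //; apply: measurable_funM => //; apply: mpow.
rewrite (@iint_scale _ (fun t => (f t `^ P)%:E)) //; first last.
- by rewrite divr_ge0 ?mulr_ge0 ?powR_ge0 // ltW.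
- by move=> t; rewrite lee_fin powR_ge0.
rewrite (@iint_scale _ (fun t => (g t `^ Q)%:E)) //; first last.
- by rewrite divr_ge0 ?mulr_ge0 ?powR_ge0 // ltW.
- by move=> t; rewrite lee_fin powR_ge0.
rewrite -/A -/B eA eB !poweR_EFin -!EFinM -EFinD lee_fin.
rewrite le_eqVlt; apply/orP; left; apply/eqP.
rewrite -/cA -/cB.
have -> : (cA * cB / (a * P) * a + cA * cB / (b * Q) * b = cA * cB * (P^-1 + Q^-1))%R.
  by field; rewrite ?gt_eqF.
by rewrite PQ mulr1.
Qed.

End Iint.

Theorem theorem3p2 (R : realType) (d : nat) (p s a1 a2 q : R) :
  (1 <= d)%N -> 1 < p -> 0 < s < 1 ->
  - d%:R < a1 * p < s * p -> - d%:R < a2 * p < s * p ->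
  0 <= (a1 + a2) * p < s * p -> s * p - (a1 + a2) * p < d%:R ->
  p < q < p * (d%:R - s + (a1 + a2)) / (d%:R - s * p + (a1 + a2) * p) ->
  let alpha := a1 + a2 in
  let pstar := d%:R * p / (d%:R - s * p + alpha * p) in
  let r := p * (q - 1) / (p - 1) in
  let a := d%:R * (q - p) / ((q - 1) * (d%:R * p - (d%:R - s * p + alpha * p) * q)) in
  forall C : R, 0 < C ->
  (forall u : 'rV[R]_d -> R, inW s p a1 a2 u ->
     (Lpnorm pstar u <= (C `^ p^-1)%:E * gagliardo s p a1 a2 u)%E) ->
  forall u : 'rV[R]_d -> R,
    inW s p a1 a2 u -> inLq q u -> u <> (fun _ => 0) ->
    (Lpnorm r u <= (C `^ (a / p))%:E * poweR (gagliardo s p a1 a2 u) a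
                    * poweR (Lpnorm q u) (1 - a))%E.
Proof.
move=> d1 p1 /andP[s0 s1] _ _ /andP[al0 als] sad /andP[pq qlt].
move=> alpha pstar r a C C0 Sob u uW uLq _.
rewrite -/alpha in qlt sad al0 als.
have p0 : 0 < p by lra.
have q1 : 1 < q by lra.
set dR := (d%:R : R) in qlt sad.
set D := dR - s * p + alpha * p in qlt.
have eD : D = dR - s * p + alpha * p by [].
have ea : a = dR * (q - p) / ((q - 1) * (dR * p - D * q)) by [].
have eps : pstar = dR * p / D by [].
have er : r = p * (q - 1) / (p - 1) by [].
clearbody a pstar r.
clearbody D.
have D0 : 0 < D by rewrite eD; lra.
have als' : alpha < s by rewrite -(ltr_pM2r p0).
have qD : q * D < p * (dR - s + alpha) by rewrite -ltr_pdivlMr //.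
have dpos : 0 < dR * p - D * q by nra.
have qD2 : (q - 1) * D < dR * (p - 1) by lra.
have dR0 : 0 < dR by lra.
have r0 : 0 < r by rewrite er divr_gt0 ?mulr_gt0 ?subr_gt0.
have ps0 : 0 < pstar by rewrite eps divr_gt0 ?mulr_gt0.
have a0 : 0 < a by rewrite ea; apply: divr_gt0; apply: mulr_gt0; lra.
have a1' : 0 < 1 - a.
  have -> : 1 - a = q * (dR * (p - 1) - D * (q - 1)) / ((q - 1) * (dR * p - D * q)).
    rewrite ea; field; rewrite gt_eqF //; lra.
  apply: divr_gt0; apply: mulr_gt0; lra.
pose f := fun t : d.-tuple R => `|u (row_of_tuple t)|.
have mf : measurable_fun setT f.
  have := measurableT_comp (@normr_measurable R setT) uW.1; exact.
have f0 t : 0 <= f t by rewrite /f normr_ge0.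
pose P := pstar / (a * r).
pose Q := q / ((1 - a) * r).
have P0 : 0 < P by apply: divr_gt0 => //; apply: mulr_gt0.
have Q0 : 0 < Q by apply: divr_gt0; [lra | apply: mulr_gt0].
have PQ : P^-1 + Q^-1 = 1.
  have q0 : 0 < q by lra.
  have pm1 : 0 < p - 1 by lra.
  have qm1 : 0 < q - 1 by lra.
  rewrite /P /Q !invf_div eps ea er; field.
  by rewrite !gt_eqF.
have key x : 0 <= x -> x `^ (a * r) * x `^ ((1 - a) * r) = x `^ r.
  move=> x0; have ar : a * r + (1 - a) * r = r by ring.
  rewrite -powRD ar //.
  by rewrite gt_eqF.
have key2 x : 0 <= x -> (x `^ (a * r)) `^ P = x `^ pstar.
  move=> x0; rewrite -powRrM; congr (_ `^ _).
  rewrite /P; field; by rewrite !gt_eqF.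
have key3 x : 0 <= x -> (x `^ ((1 - a) * r)) `^ Q = x `^ q.
  move=> x0; rewrite -powRrM; congr (_ `^ _).
  rewrite /Q; field; by rewrite !gt_eqF.
have H := @iint_hoelder R d (fun t => f t `^ (a * r)) (fun t => f t `^ ((1 - a) * r)) P Q
   (@mpow R d f (a * r) mf) (@mpow R d f ((1 - a) * r) mf) (fun t => powR_ge0 _ _) (fun t => powR_ge0 _ _) P0 Q0 PQ.
have eL : (fun t => (f t `^ (a * r) * f t `^ ((1 - a) * r))%:E) = (fun t => (f t `^ r)%:E).
  by apply: funext => t; rewrite key.
have eP : (fun t => ((f t `^ (a * r)) `^ P)%:E) = (fun t => (f t `^ pstar)%:E).
  by apply: funext => t; rewrite key2.
have eQ : (fun t => ((f t `^ ((1 - a) * r)) `^ Q)%:E) = (fun t => (f t `^ q)%:E).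
  by apply: funext => t; rewrite key3.
rewrite eL eP eQ in H.
have eLr : Lpnorm r u = poweR (iint (fun t => (f t `^ r)%:E)) r^-1 by [].
have eLps : Lpnorm pstar u = poweR (iint (fun t => (f t `^ pstar)%:E)) pstar^-1 by [].
have eLq : Lpnorm q u = poweR (iint (fun t => (f t `^ q)%:E)) q^-1 by [].
set Ir := iint (fun t => (f t `^ r)%:E) in H eLr.
set Ips := iint (fun t => (f t `^ pstar)%:E) in H eLps.
set Iq := iint (fun t => (f t `^ q)%:E) in H eLq.
have Ir0 : (0 <= Ir)%E by apply: iint_ge0 => t; rewrite lee_fin powR_ge0.
have Ips0 : (0 <= Ips)%E by apply: iint_ge0 => t; rewrite lee_fin powR_ge0.
have Iq0 : (0 <= Iq)%E by apply: iint_ge0 => t; rewrite lee_fin powR_ge0.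
rewrite eLr.
apply: (@le_trans _ _ (poweR (poweR Ips P^-1 * poweR Iq Q^-1) r^-1)).
  apply: gt0_ler_poweR => //.
  - by rewrite invr_ge0 ltW.
  - by rewrite in_itv /= Ir0 leey.
  - by rewrite in_itv /= leey andbT mule_ge0 // poweR_ge0.
rewrite poweRM ?poweR_ge0 // -!poweRrM.
have q0 : 0 < q by lra.
have pm1 : 0 < p - 1 by lra.
have qm1 : 0 < q - 1 by lra.
have e1 : P^-1 * r^-1 = pstar^-1 * a.
  by rewrite /P invf_div; field; rewrite !gt_eqF.
have e2 : Q^-1 * r^-1 = q^-1 * (1 - a).
  by rewrite /Q invf_div; field; rewrite !gt_eqF.
rewrite e1 e2 !poweRrM -eLps -eLq.
apply: lee_wpmul2r; first exact: poweR_ge0.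
have S := Sob u uW.
apply: (le_trans (gt0_ler_poweR (ltW a0) _ _ S)).
- by rewrite in_itv /= leey andbT poweR_ge0.
- by rewrite in_itv /= leey andbT mule_ge0 // ?poweR_ge0 // lee_fin powR_ge0.
rewrite poweRM ?poweR_ge0 ?lee_fin ?powR_ge0 // poweR_EFin -powRrM mulrC.
by [].
Qed.
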